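(* Let $\mathbb{F}\in\{\mathbb{R},\mathbb{C}\}$ and let $p,q,r,s\in\mathbb{F}$ with $r\neq s^2$, $q\neq s^3$, or $p\neq s^4$. Let $\delta$ be the space quartic in $\mathbb{F}\mathbb{P}^3$ parametrised by $t\mapsto[t^4-p,\,t^3+q,\,t^2-r,\,t+s]$, $t\in\mathbb{F}$. A plane intersects $\delta$ in four points parametrised by $t_1,t_2,t_3,t_4$, counting multiplicity, if and only if $$F(t_1,t_2,t_3,t_4):=t_1t_2t_3t_4+s\sum_{i<j<k}t_it_jt_k+r\sum_{i<j}t_it_j+q\sum_i t_i+p=0.$$ In particular, if $t_1,t_2,t_3$ are distinct, then $F(t_1,t_1,t_2,t_3)=0$ if and only if the plane through the points with parameters $t_1,t_2,t_3$ intersects $\delta$ only in those three points and contains the tangent line of $\delta$ at $t_1$.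
   Context: A space quartic is an irreducible non-planar curve of degree $4$ in projective $3$-space. *)

(* Defs.v *)
From HB Require Import structures.
From mathcomp Require Import all_boot all_order all_algebra.
From mathcomp Require Import reals.
From mathcomp Require Import complex.
Set Implicit Arguments. Unset Strict Implicit. Unset Printing Implicit Defensive.
Import Order.TTheory GRing.Theory Num.Theory.
Local Open Scope ring_scope.

Section QuarticDefs.
Variable F : fieldType.
Variables p q r s : F.

Definition qcoord (i : 'I_4) : {poly F} :=
  match val i with
  | 0 => 'X^4 - p%:P
  | 1 => 'X^3 + q%:P
  | 2 => 'X^2 - r%:P
  | _ => 'X + s%:P
  end.

Definition qpoint (t : F) : 'rV[F]_4 := \row_i (qcoord i).[t].
Definition qtangent (t : F) : 'rV[F]_4 := \row_i (qcoord i)^`().[t].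

(* A plane in FP^3 is given by a nonzero row a : a_0 x_0 + ... + a_3 x_3 = 0. *)
Definition on_plane (a v : 'rV[F]_4) : Prop := \sum_i a 0 i * v 0 i = 0.

Definition pullback (a : 'rV[F]_4) : {poly F} := \sum_i a 0 i *: qcoord i.

(* The plane a meets delta exactly in the points with parameters t1..t4,
   counted with multiplicity: no intersection at the point at infinity
   [1:0:0:0] = delta(oo) (i.e. a_0 <> 0), and every parameter x has
   intersection multiplicity (root multiplicity of the pullback) equal
   to the number of times x occurs among t1..t4. *)
Definition meets_in_four (a : 'rV[F]_4) (t1 t2 t3 t4 : F) : Prop :=
  a != 0 /\ a 0 0 != 0 /\
  forall x : F, mup x (pullback a) = count_mem x [:: t1; t2; t3; t4].

Definition Fq (t1 t2 t3 t4 : F) : F :=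
  t1 * t2 * t3 * t4
  + s * (t1 * t2 * t3 + t1 * t2 * t4 + t1 * t3 * t4 + t2 * t3 * t4)
  + r * (t1 * t2 + t1 * t3 + t1 * t4 + t2 * t3 + t2 * t4 + t3 * t4)
  + q * (t1 + t2 + t3 + t4) + p.

End QuarticDefs.

Definition lemma3p2_over (F : fieldType) : Prop :=
  forall p q r s : F,
  (r != s ^+ 2) \/ (q != s ^+ 3) \/ (p != s ^+ 4) ->
  (forall t1 t2 t3 t4 : F,
      Fq p q r s t1 t2 t3 t4 = 0 <->
      exists a : 'rV[F]_4, meets_in_four p q r s a t1 t2 t3 t4)
  /\
  (forall t1 t2 t3 : F,
      t1 != t2 -> t1 != t3 -> t2 != t3 ->
      (Fq p q r s t1 t1 t2 t3 = 0 <->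
       exists a : 'rV[F]_4,
         a != 0 /\
             on_plane a (qpoint p q r s t1) /\
             on_plane a (qpoint p q r s t2) /\
             on_plane a (qpoint p q r s t3) /\
             on_plane a (qtangent p q r s t1) /\
             (* it meets delta only in those three points
                (not at delta(oo) = [1:0:0:0], and no other parameter) *)
             a 0 0 != 0 /\
             forall x : F, root (pullback p q r s a) x ->
               x \in [:: t1; t2; t3])).

(* Main.v *)
Require Import Defs.
From HB Require Import structures.
From mathcomp Require Import all_boot all_order all_algebra ring.
From mathcomp Require Import reals.
From mathcomp Require Import complex.
Set Implicit Arguments. Unset Strict Implicit. Unset Printing Implicit Defensive.
Import GRing.Theory.
Local Open Scope ring_scope.
Section S.
Variable F : fieldType.
Variables p q r s : F.
Definition G (c0 c1 c2 c3 c4 : F) : {poly F} :=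
  c0%:P + c1%:P*'X + c2%:P*'X^2 + c3%:P*'X^3 + c4%:P*'X^4.
Lemma coefG c0 c1 c2 c3 c4 k : (G c0 c1 c2 c3 c4)`_k =
  if k == 0%N then c0 else if k == 1%N then c1 else if k == 2%N then c2
  else if k == 3%N then c3 else if k == 4%N then c4 else 0.
Proof.
rewrite /G !coefD !coefCM coefC coefX !coefXn.
by case: k => [|[|[|[|[|k]]]]] /=; rewrite ?mulr1 ?mulr0 ?addr0 ?add0r.
Qed.
Lemma G_inj c0 c1 c2 c3 c4 d0 d1 d2 d3 d4 : G c0 c1 c2 c3 c4 = G d0 d1 d2 d3 d4 ->
  [/\ c0 = d0, c1 = d1, c2 = d2, c3 = d3 & c4 = d4].
Proof.
move=> E.
have h k := congr1 (fun P : {poly F} => P`_k) E.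
by move: (h 0%N) (h 1%N) (h 2%N) (h 3%N) (h 4%N); rewrite /= !coefG /=.
Qed.
Lemma sizeG0 c0 c1 c2 c3 : (size (G c0 c1 c2 c3 0) <= 4)%N.
Proof.
apply/leq_sizeP => j hj; rewrite coefG.
by case: j hj => [|[|[|[|[|j]]]]].
Qed.
Lemma scaleG c c0 c1 c2 c3 c4 : c *: G c0 c1 c2 c3 c4 = G (c*c0) (c*c1) (c*c2) (c*c3) (c*c4).
Proof. by rewrite /G -!mul_polyC !rmorphM; ring. Qed.
Lemma subG c0 c1 c2 c3 c4 d0 d1 d2 d3 d4 :
  G c0 c1 c2 c3 c4 - G d0 d1 d2 d3 d4 = G (c0-d0) (c1-d1) (c2-d2) (c3-d3) (c4-d4).
Proof. by rewrite /G !rmorphB; ring. Qed.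

Definition A1 (a : 'rV[F]_4) := a 0 (lift ord0 ord0).
Definition A2 (a : 'rV[F]_4) := a 0 (lift ord0 (lift ord0 ord0)).
Definition A3 (a : 'rV[F]_4) := a 0 (lift ord0 (lift ord0 (lift ord0 ord0))).

Lemma pullbackE (a : 'rV[F]_4) : pullback p q r s a = G
  (- a 0 0 * p + A1 a * q - A2 a * r + A3 a * s) (A3 a) (A2 a) (A1 a) (a 0 0).
Proof.
rewrite /pullback !big_ord_recl big_ord0 /qcoord /= /G /A1 /A2 /A3.
by rewrite -!mul_polyC !rmorphD !rmorphN !rmorphM; ring.
Qed.

Definition e1 t1 t2 t3 t4 : F := t1 + t2 + t3 + t4.
Definition e2 t1 t2 t3 t4 : F := t1 * t2 + t1 * t3 + t1 * t4 + t2 * t3 + t2 * t4 + t3 * t4.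
Definition e3 t1 t2 t3 t4 : F := t1 * t2 * t3 + t1 * t2 * t4 + t1 * t3 * t4 + t2 * t3 * t4.
Definition e4 t1 t2 t3 t4 : F := t1 * t2 * t3 * t4.

Lemma prodE t1 t2 t3 t4 : \prod_(y <- [:: t1; t2; t3; t4]) ('X - y%:P) =
  G (e4 t1 t2 t3 t4) (- e3 t1 t2 t3 t4) (e2 t1 t2 t3 t4) (- e1 t1 t2 t3 t4) 1.
Proof.
rewrite !big_cons big_nil /G /e1 /e2 /e3 /e4.
by rewrite !rmorphN !rmorphD !rmorphM rmorph1; ring.
Qed.

Definition arow t1 t2 t3 t4 : 'rV[F]_4 :=
  \row_(i < 4) [:: 1; - e1 t1 t2 t3 t4; e2 t1 t2 t3 t4; - e3 t1 t2 t3 t4]`_i.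

Lemma arow0 t1 t2 t3 t4 : arow t1 t2 t3 t4 0 0 = 1.
Proof. by rewrite /arow mxE. Qed.

Lemma arow_neq0 t1 t2 t3 t4 : arow t1 t2 t3 t4 != 0.
Proof.
apply/eqP => h; have := congr1 (fun m : 'rV[F]_4 => m 0 0) h.
by rewrite arow0 mxE; apply/eqP; rewrite oner_eq0.
Qed.

Lemma pullback_arow t1 t2 t3 t4 : Fq p q r s t1 t2 t3 t4 = 0 ->
  pullback p q r s (arow t1 t2 t3 t4) = \prod_(y <- [:: t1; t2; t3; t4]) ('X - y%:P).
Proof.
move=> hF; rewrite pullbackE prodE /A1 /A2 /A3 /arow !mxE /=.
congr G; apply/eqP; rewrite -subr_eq0 -oppr_eq0; apply/eqP; rewrite -hF /Fq /e1 /e2 /e3 /e4.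
ring.
Qed.

Lemma key (a : 'rV[F]_4) t1 t2 t3 t4 : a 0 0 != 0 ->
  \prod_(y <- [:: t1; t2; t3; t4]) ('X - y%:P) %| pullback p q r s a ->
  Fq p q r s t1 t2 t3 t4 = 0.
Proof.
move=> a0 hd.
set P := \prod_(y <- _) _ in hd.
have hsz : size P = 5%N by rewrite size_prod_XsubC.
have hD : pullback p q r s a - a 0 0 *: P = 0.
  apply/eqP; apply: contraT => hn.
  have hd2 : P %| a 0 0 *: P by rewrite -mul_polyC dvdp_mull ?dvdpp.
  have := dvdp_leq hn (dvdp_sub hd hd2).
  rewrite hsz pullbackE /P prodE scaleG subG mulr1 subrr.
  by move=> /leq_trans /(_ (sizeG0 _ _ _ _)).
move/eqP: hD; rewrite subr_eq0 => /eqP.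
rewrite pullbackE /P prodE scaleG => /G_inj [h0 h1 h2 h3 _].
apply/eqP; rewrite -(mulrI_eq0 _ (lregP a0)); apply/eqP.
move: h0; rewrite h1 h2 h3 => /eqP; rewrite -subr_eq0 => /eqP h0.
apply/eqP; rewrite -oppr_eq0; apply/eqP; rewrite -h0 /Fq /e1 /e2 /e3 /e4; ring.
Qed.

Lemma mup_dvd (l : seq F) (P : {poly F}) : P != 0 ->
  (forall x, (count_mem x l <= mup x P)%N) -> \prod_(y <- l) ('X - y%:P) %| P.
Proof.
elim: l P => [|y l IH] P hP hc; first by rewrite big_nil dvd1p.
have : (0 < mup y P)%N by apply: leq_trans (hc y); rewrite /= eqxx.
rewrite -XsubC_dvd // => /dvdpP [Q hQ].
have hQ0 : Q != 0 by apply: contraNneq hP => h; rewrite hQ h mul0r.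
rewrite big_cons hQ [Q * _]mulrC; apply: dvdp_mul; first exact: dvdpp.
apply: IH => // x; have := hc x.
rewrite hQ mupM ?polyXsubC_eq0 // -(expr1 ('X - y%:P)) mup_XsubCX /=.
by case: (y == x) => /=; rewrite ?addn0 ?add1n ?addn1 ?ltnS.
Qed.

Lemma pullback_neq0 (a : 'rV[F]_4) : a 0 0 != 0 -> pullback p q r s a != 0.
Proof.
move=> a0; apply/eqP => h; move: a0.
have := congr1 (fun P : {poly F} => P`_4) h; rewrite pullbackE coefG coef0 /= => ->.
by rewrite eqxx.
Qed.

Lemma part1 t1 t2 t3 t4 : Fq p q r s t1 t2 t3 t4 = 0 <->
  exists a : 'rV[F]_4, meets_in_four p q r s a t1 t2 t3 t4.
Proof.
split.
  move=> hF; exists (arow t1 t2 t3 t4); split; first exact: arow_neq0.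
  split; first by rewrite arow0 oner_neq0.
  by move=> x; rewrite pullback_arow // mu_prod_XsubC.
move=> [a [_ [a0 hm]]]; apply: (key a0); apply: mup_dvd.
  exact: pullback_neq0.
by move=> x; rewrite hm.
Qed.

Lemma onp (a : 'rV[F]_4) t : on_plane a (qpoint p q r s t) <-> root (pullback p q r s a) t.
Proof.
rewrite /on_plane /root /pullback horner_sum.
have -> : \sum_i a 0 i * qpoint p q r s t 0 i = \sum_i (a 0 i *: qcoord p q r s i).[t].
  by apply: eq_bigr => i _; rewrite hornerZ mxE.
by split => [->|/eqP].
Qed.

Lemma ont (a : 'rV[F]_4) t : on_plane a (qtangent p q r s t) <->
  (pullback p q r s a)^`().[t] = 0.
Proof.
rewrite /on_plane /pullback raddf_sum horner_sum.
have -> : \sum_i a 0 i * qtangent p q r s t 0 i = \sum_i (a 0 i *: qcoord p q r s i)^`().[t].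
  by apply: eq_bigr => i _; rewrite derivZ hornerZ mxE.
by [].
Qed.

Lemma part2 t1 t2 t3 : t1 != t2 -> t1 != t3 -> t2 != t3 ->
  (Fq p q r s t1 t1 t2 t3 = 0 <->
       exists a : 'rV[F]_4,
         a != 0 /\
             on_plane a (qpoint p q r s t1) /\
             on_plane a (qpoint p q r s t2) /\
             on_plane a (qpoint p q r s t3) /\
             on_plane a (qtangent p q r s t1) /\
             a 0 0 != 0 /\
             forall x : F, root (pullback p q r s a) x ->
               x \in [:: t1; t2; t3]).
Proof.
move=> h12 h13 h23; split.
  move=> hF; exists (arow t1 t1 t2 t3).
  have hP := pullback_arow hF.
  split; first exact: arow_neq0.
  rewrite !onp ont hP !root_prod_XsubC !inE !eqxx ?orbT /=.
  split; first by [].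
  split; first by [].
  split; first by [].
  split.
    rewrite !big_cons big_nil !derivM !hornerE /=.
    by rewrite subrr !(mulr0, mul0r, addr0, add0r).
  split; first by rewrite arow0 oner_neq0.
  move=> x; rewrite root_prod_XsubC !inE; by case: (x == t1).
move=> [a [_ [h1 [h2 [h3 [ht [a0 _]]]]]]].
apply: (key a0).
move: h1 h2 h3 ht; rewrite !onp ont.
set P := pullback p q r s a.
move=> /factor_theorem [Q ->] h2 h3.
rewrite derivM derivXsubC !hornerE subrr mulr0 add0r => /eqP /factor_theorem [Q2 hQ2].
rewrite hQ2 in h2 h3 *.
have rootMX (R : {poly F}) x y : x != y -> root (R * ('X - y%:P)) x = root R x.
  by move=> hxy; rewrite rootM root_XsubC (negbTE hxy) orbF.
move: h2; rewrite !rootMX 1?eq_sym // => /factor_theorem [Q3 hQ3].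
rewrite hQ3 in h3 *.
move: h3; rewrite !rootMX 1?eq_sym // => /factor_theorem [Q4 ->].
apply/dvdpP; exists Q4; rewrite !big_cons big_nil; ring.
Qed.
End S.

Lemma over_any (F : fieldType) : lemma3p2_over F.
Proof.
move=> p q r s _; split.
  by move=> t1 t2 t3 t4; apply: part1.
by move=> t1 t2 t3; apply: part2.
Qed.

Theorem lemma3p2 (R : reals.Real.type) :
  lemma3p2_over R /\ lemma3p2_over (complex R).
Proof. by split; apply: over_any. Qed.
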